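(* Let $\widehat\Psi\in\mathcal P_c(Y)$. There exists an increasing continuous function $R:[0,+\infty)\to[0,+\infty)$ such that for every $T\ge0$, every $k$ and every $t\in[0,T]$, $\Psi^k(t),\ \underline\Psi^k(t),\ \widetilde\Psi^k(t)\in\mathcal P(B^Y_{R(T)})$, where these are the curves of the Markov alternate scheme started at $\widehat\Psi$.
   Context: Markov setting. Fix $n\ge2$, $d\ge1$. $\Lambda_n:=\{\lambda\in\mathbb R^n:\lambda_h>0,\ \sum_h\lambda_h=1\}$, $\overline\Lambda_n$ its closure, identified with $\mathcal P(U)$ for $U:=\{e_1,\dots,e_n\}\subset\mathbb R^n$. $Y:=\mathbb R^d\times\overline\Lambda_n$ with norm $\|(x,\lambda)\|:=|x|+\|\lambda\|_{\mathrm{BL}}$, $\|\mu\|_{\mathrm{BL}}:=\sup\{\sum_h\mu_h\varphi(e_h):\|\varphi\|_\infty+\mathrm{Lip}(\varphi)\le1\}$; $B_R:=\{|x|\le R\}\subset\mathbb R^d$, $B^Y_R:=\{y\in Y:\|y\|\le R\}$. $\mathcal P_1(Y)$, $\mathcal P_c(Y)$, $\mathcal P(K)$: probability measures with finite first moment, compact support, support in $K$; $W_1$ the Kantorovich–Rubinstein distance for $\|\cdot\|$; $m_1(\Psi):=\int\|y\|d\Psi$. A map $\mathcal Q:\mathbb R^d\times\mathcal P_1(Y)\to\mathbb R^{n\times n}$ satisfies (Q0) $\mathcal Q_{h\ell}\ge0$ for $h\ne\ell$, $\mathcal Q_{hh}=-\sum_{\ell\ne h}\mathcal Q_{\ell h}$;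 (Q1) there is a unique $\sigma(x,\Psi)\in\Lambda_n$ with $\mathcal Q_{h\ell}\sigma_\ell=\mathcal Q_{\ell h}\sigma_h$; (Q2) $|\mathcal Q(x_1,\Psi_1)-\mathcal Q(x_2,\Psi_2)|\le L_{\mathcal Q,R}(|x_1-x_2|+W_1(\Psi_1,\Psi_2))$ for $x_i\in B_R$, $\Psi_i\in\mathcal P(B^Y_R)$; (Q3) $|\mathcal Q(x,\Psi)|\le M_{\mathcal Q}(1+|x|+m_1(\Psi))$. Velocity fields $v_\Psi:Y\to\mathbb R^d$ satisfy (v1) $|v_\Psi(y_1)-v_\Psi(y_2)|\le L_{v,R}\|y_1-y_2\|$ for $y_i\in B^Y_R$, $\Psi\in\mathcal P(B^Y_R)$; (v2) $|v_{\Psi_1}(y)-v_{\Psi_2}(y)|\le L_{v,R}W_1(\Psi_1,\Psi_2)$ for $\Psi_i\in\mathcal P(B^Y_R)$, $y\in B^Y_R$; (v3) $|v_\Psi(y)|\le M_v(1+\|y\|+m_1(\Psi))$. $E(x,\lambda,\Psi):=\sum_h\lambda_h\ln(\lambda_h/\sigma_h(x,\Psi))$; $\Phi(a,b):=\frac{a-b}{\ln a-\ln b}$, $\Phi(a,a):=a$; $K(x,\lambda,\Psi):=\sum_{\ell=2}^n\sum_{h<\ell}\mathcal Q_{h\ell}\sigma_\ell\Phi(\lambda_h/\sigma_h,\lambda_\ell/\sigma_\ell)(e_h-e_\ell)\otimes(e_h-e_\ell)$; $G$ its inverse on $\mathbb R^n_0:=\{\sum\xi_h=0\}$; $\mathsf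 d_{(x,\Psi)}(\lambda_1,\lambda_2):=\inf\{\int_0^1\langle G(x,\rho,\Psi)\rho',\rho'\rangle^{1/2}ds:\rho\in C^1([0,1];\Lambda_n),\rho(0)=\lambda_1,\rho(1)=\lambda_2\}$; $E$ and $\mathsf d$ are extended continuously to $\overline\Lambda_n$. Markov alternate scheme. Let $\tau_k>0$, $\tau_k\to0$, $t^k_i:=i\tau_k$ ($i\in\mathbb N$), $\Psi^k_0:=\widehat\Psi$. Given $\Psi^k_i$, for $(x,\lambda)\in Y$ let $\lambda^{\mathrm{new}}(x,\lambda)$ be a minimizer (measurably selected) of $\rho\mapsto E(x,\rho,\Psi^k_i)+\frac1{2\tau_k}\mathsf d^2_{(x,\Psi^k_i)}(\rho,\lambda)$ over $\overline\Lambda_n$; for $t\in[t^k_i,t^k_{i+1}]$: $\Lambda^k_{i+1}(t,x,\lambda):=\lambda+\frac{t-t^k_i}{\tau_k}(\lambda^{\mathrm{new}}(x,\lambda)-\lambda)$; $\widetilde\Psi^k_{i+1}:=$ push-forward of $\Psi^k_i$ under $(x,\lambda)\mapsto(x,\Lambda^k_{i+1}(t^k_{i+1},x,\lambda))$; $X^k_{i+1}(t,x,\lambda):=x+(t-t^k_i)v_{\widetilde\Psi^k_{i+1}}(x,\Lambda^k_{i+1}(t^k_{i+1},x,\lambda))$; $\Psi^k(t):=(X^k_{i+1}(t,\cdot),\Lambda^k_{i+1}(t,\cdot))_\#\Psi^k_i$, $\Psi^k_{i+1}:=\Psi^k(t^k_{i+1})$; $\widetilde\Psi^k(t):=\widetilde\Psi^k_{i+1}$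 on $(t^k_i,t^k_{i+1}]$, $\underline\Psi^k(t):=\Psi^k_i$ on $[t^k_i,t^k_{i+1})$. *)

(* Defs.v *)
From HB Require Import structures.
From mathcomp Require Import all_boot all_order all_algebra.
From mathcomp Require Import all_classical all_reals all_analysis.
Set Implicit Arguments. Unset Strict Implicit. Unset Printing Implicit Defensive.
Import Order.TTheory GRing.Theory Num.Theory.
Import numFieldNormedType.Exports.
Local Open Scope classical_set_scope.
Local Open Scope ring_scope.

Section MarkovScheme.
Variables (R : realType) (d n : nat).

Definition enorm m (x : 'rV[R]_m) : R := Num.sqrt (\sum_(i < m) x ord0 i ^+ 2).

(* Frobenius norm of an n x n matrix (any matrix norm: all are equivalent). *)
Definition mnorm (M : 'M[R]_n) : R := Num.sqrt (\sum_(i < n) \sum_(j < n) M i j ^+ 2).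

Definition ev (h : 'I_n) : 'rV[R]_n := delta_mx ord0 h.

Definition simplex (l : 'rV[R]_n) : Prop :=
  (forall h, 0 < l ord0 h) /\ \sum_(h < n) l ord0 h = 1.
Definition csimplex (l : 'rV[R]_n) : Prop :=
  (forall h, 0 <= l ord0 h) /\ \sum_(h < n) l ord0 h = 1.

(* || phi ||_oo + Lip(phi) for phi : U -> R, U = {e_1,...,e_n} *)
Definition phi_supnorm (phi : 'I_n -> R) : R := \big[Num.max/0]_(h < n) `|phi h|.
Definition phi_lip (phi : 'I_n -> R) : R :=
  \big[Num.max/0]_(h < n) \big[Num.max/0]_(l < n | l != h)
     (`|phi h - phi l| / enorm (ev h - ev l)).

(* bounded-Lipschitz norm of a (signed) measure mu on U, seen as a vector *)
Definition blnorm (mu : 'rV[R]_n) : R :=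
  sup [set s | exists phi : 'I_n -> R,
        phi_supnorm phi + phi_lip phi <= 1 /\ s = \sum_(h < n) mu ord0 h * phi h].

(* ambient type of Y = R^d x closure(Lambda_n) *)
Definition Yt := ('rV[R]_d * 'rV[R]_n)%type.
Definition Yset : set Yt := [set y | csimplex y.2].
Definition ynorm (y : Yt) : R := enorm y.1 + blnorm y.2.
Definition ydist (y1 y2 : Yt) : R := enorm (y1.1 - y2.1) + blnorm (y1.2 - y2.2).
Definition ballR (r : R) : set 'rV[R]_d := [set x | enorm x <= r].
Definition ballY (r : R) : set Yt := [set y | ynorm y <= r].

Definition Ym := g_sigma_algebraType (@open Yt).
Definition Prob := probability Ym R.

Definition supported_in (P : Prob) (K : set Yt) : Prop := P (~` K) = 0%E.
(* P in P(Y) and P in P(K) for K subset of Y *)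
Definition inPY (P : Prob) : Prop := supported_in P Yset.
Definition inPK (P : Prob) (K : set Yt) : Prop := supported_in P (Yset `&` K).
Definition m1e (P : Prob) : \bar R := (\int[P]_y (ynorm y)%:E)%E.
Definition m1 (P : Prob) : R := fine (m1e P).
Definition inP1 (P : Prob) : Prop := inPY P /\ (m1e P < +oo)%E.
(* compact support in Y (compact subsets of Y are exactly the closed bounded ones) *)
Definition inPc (P : Prob) : Prop := inPY P /\ exists r : R, inPK P (ballY r).

(* Kantorovich-Rubinstein distance (dual formulation) for the norm of Y *)
Definition W1 (P1 P2 : Prob) : R :=
  sup [set s | exists f : Ym -> R, measurable_fun [set: Ym] f /\
        (forall y1 y2 : Yt, Yset y1 -> Yset y2 -> `|f y1 - f y2| <= ydist y1 y2) /\
        s = Rintegral P1 [set: Ym] f - Rintegral P2 [set: Ym] f].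

Variable Q : 'rV[R]_d -> Prob -> 'M[R]_n.

Definition detailed_balance (x : 'rV[R]_d) (P : Prob) (s : 'rV[R]_n) : Prop :=
  forall h l, Q x P h l * s ord0 l = Q x P l h * s ord0 h.
(* sigma(x, Psi): the unique element of Lambda_n given by (Q1) *)
Definition sigma (x : 'rV[R]_d) (P : Prob) : 'rV[R]_n :=
  xget 0 [set s | simplex s /\ detailed_balance x P s].

(* relative entropy; with mathcomp's ln 0 = 0 this is already the continuous
   extension to the closed simplex (0 ln 0 = 0) *)
Definition Ent (x : 'rV[R]_d) (l : 'rV[R]_n) (P : Prob) : R :=
  \sum_(h < n) l ord0 h * ln (l ord0 h / sigma x P ord0 h).

Definition logmean (a b : R) : R := if a == b then a else (a - b) / (ln a - ln b).

Definition Kmat (x : 'rV[R]_d) (l : 'rV[R]_n) (P : Prob) : 'M[R]_n :=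
  \sum_(l0 < n) \sum_(h < n | (h < l0)%N)
    (Q x P h l0 * sigma x P ord0 l0 *
       logmean (l ord0 h / sigma x P ord0 h) (l ord0 l0 / sigma x P ord0 l0))
    *: ((ev h - ev l0)^T *m (ev h - ev l0)).

(* G = inverse of K on R^n_0 = {sum xi = 0} *)
Definition Gapp (x : 'rV[R]_d) (l : 'rV[R]_n) (P : Prob) (xi : 'rV[R]_n) : 'rV[R]_n :=
  xget 0 [set eta : 'rV[R]_n | \sum_(i < n) eta ord0 i = 0 /\ eta *m Kmat x l P = xi].
Definition quadG (x : 'rV[R]_d) (l : 'rV[R]_n) (P : Prob) (xi : 'rV[R]_n) : R :=
  \sum_(i < n) Gapp x l P xi ord0 i * xi ord0 i.

Definition C1_curve (rho : R -> 'rV[R]_n) : Prop :=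
  (forall s, 0 <= s <= 1 -> simplex (rho s)) /\
  (forall s, 0 <= s <= 1 -> derivable rho s 1) /\
  {within `[0, 1], continuous (derive1 rho)}.

Definition curve_length (x : 'rV[R]_d) (P : Prob) (rho : R -> 'rV[R]_n) : R :=
  Rintegral lebesgue_measure `[0, 1]
    (fun s => Num.sqrt (quadG x (rho s) P (derive1 rho s))).

Definition dist (x : 'rV[R]_d) (P : Prob) (l1 l2 : 'rV[R]_n) : R :=
  inf [set L | exists rho, C1_curve rho /\ rho 0 = l1 /\ rho 1 = l2 /\
                            L = curve_length x P rho].

(* its continuous extension to the closed simplex *)
Definition dbar (x : 'rV[R]_d) (P : Prob) (l1 l2 : 'rV[R]_n) : R :=
  xget 0 [set L | forall e : R, 0 < e -> exists2 del : R, 0 < del &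
     forall m1 m2, simplex m1 -> simplex m2 -> enorm (m1 - l1) < del ->
       enorm (m2 - l2) < del -> `|dist x P m1 m2 - L| < e].

End MarkovScheme.

Section SchemeMaps.
Variables (R : realType) (d n : nat).

Definition tk (tau : nat -> R) (k i : nat) : R := i%:R * tau k.

Definition Lam (tau : nat -> R) (lnew : nat -> nat -> Yt R d n -> 'rV[R]_n)
    (k i : nat) (t : R) (y : Yt R d n) : 'rV[R]_n :=
  y.2 + ((t - tk tau k i) / tau k) *: (lnew k i y - y.2).

(* X^k_{i+1}(t, x, lambda); PsiT k i.+1 is tilde Psi^k_{i+1} *)
Definition Xmap (tau : nat -> R) (lnew : nat -> nat -> Yt R d n -> 'rV[R]_n)
    (v : Prob R d n -> Yt R d n -> 'rV[R]_d) (PsiT : nat -> nat -> Prob R d n)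
    (k i : nat) (t : R) (y : Yt R d n) : 'rV[R]_d :=
  y.1 + (t - tk tau k i) *: v (PsiT k i.+1) (y.1, Lam tau lnew k i (tk tau k i.+1) y).

End SchemeMaps.

(* Main.v *)
Require Import Defs.
From HB Require Import structures.
From mathcomp Require Import all_boot all_order all_algebra.
From mathcomp Require Import all_classical all_reals all_analysis.
From mathcomp Require Import ring lra.
Import Order.TTheory GRing.Theory Num.Theory.
Import numFieldNormedType.Exports.
Local Open Scope classical_set_scope.
Local Open Scope ring_scope.
Set Implicit Arguments. Unset Strict Implicit. Unset Printing Implicit Defensive.


Section BL.
Variables (R : realType) (n : nat).
Implicit Types (mu a b l : 'rV[R]_n).

Lemma bigmax0 (I : finType) (P : pred I) (F : I -> R) :
  (forall i, P i -> F i = 0) -> \big[Num.max/0]_(i | P i) F i = 0.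
Proof.
move=> H; apply: (big_ind (fun x => x = 0)) => // x y -> ->.
by rewrite maxxx.
Qed.

Definition BLset (mu : 'rV[R]_n) := [set s | exists phi : 'I_n -> R,
        phi_supnorm phi + phi_lip phi <= 1 /\ s = \sum_(h < n) mu ord0 h * phi h].

Lemma phi_lip_ge0 (phi : 'I_n -> R) : 0 <= phi_lip phi.
Proof. by apply/bigmax_geP; left. Qed.

Lemma phi_sup_ge (phi : 'I_n -> R) h : `|phi h| <= phi_supnorm phi.
Proof. by apply/bigmax_geP; right; exists h. Qed.

Lemma BL_phi (phi : 'I_n -> R) : phi_supnorm phi + phi_lip phi <= 1 ->
  forall h, `|phi h| <= 1.
Proof.
move=> H h; apply: le_trans (phi_sup_ge phi h) _.
have := phi_lip_ge0 phi; lra.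
Qed.

Lemma BL_elem mu s : BLset mu s -> s <= \sum_(h < n) `|mu ord0 h|.
Proof.
move=> [phi [Hp ->]]; apply: ler_sum => h _.
apply: le_trans (ler_norm _) _; rewrite normrM.
by apply: ler_piMr => //; exact: BL_phi.
Qed.

Lemma BL_ub mu : has_ubound (BLset mu).
Proof. by exists (\sum_(h < n) `|mu ord0 h|) => s /BL_elem. Qed.

Lemma BL_0 mu : BLset mu 0.
Proof.
exists (fun _ => 0); split; last by rewrite big1 // => h _; rewrite mulr0.
rewrite /phi_supnorm /phi_lip bigmax0 ?bigmax0 ?addr0 //.
  by move=> h _; rewrite bigmax0 // => l _; rewrite subr0 normr0 mul0r.
by move=> h _; rewrite normr0.
Qed.

Lemma blnorm_ge0 mu : 0 <= blnorm mu.
Proof. exact: (ub_le_sup (BL_ub mu) (BL_0 mu)). Qed.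

Lemma blnorm_le mu : blnorm mu <= \sum_(h < n) `|mu ord0 h|.
Proof. by apply: ge_sup; [exists 0; exact: BL_0 | move=> s /BL_elem]. Qed.

Lemma blnorm_lip a b : blnorm a <= blnorm b + \sum_(h < n) `|a ord0 h - b ord0 h|.
Proof.
apply: ge_sup; first by exists 0; exact: BL_0.
move=> s [phi [Hp ->]].
have -> : \sum_(h < n) a ord0 h * phi h = \sum_(h < n) b ord0 h * phi h
   + \sum_(h < n) (a ord0 h - b ord0 h) * phi h.
  by rewrite -big_split /=; apply: eq_bigr => h _; rewrite -mulrDl addrC subrK.
apply: lerD.
  by apply: (ub_le_sup (BL_ub b)); exists phi.
apply: ler_sum => h _; apply: le_trans (ler_norm _) _; rewrite normrM.
by apply: ler_piMr => //; exact: BL_phi.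
Qed.

Lemma blnorm_simplex l : (0 < n)%N -> csimplex l -> blnorm l = 1.
Proof.
move=> n0 [l0 l1]; apply/le_anti/andP; split.
  by apply: le_trans (blnorm_le l) _; rewrite -l1 le_eqVlt; apply/orP; left;
    apply/eqP; apply: eq_bigr => h _; rewrite ger0_norm.
apply: (ub_le_sup (BL_ub l)); exists (fun _ => 1); split; last first.
  by rewrite -{1}l1; apply: eq_bigr => h _; rewrite mulr1.
have -> : phi_lip (fun _ : 'I_n => 1 : R) = 0.
  rewrite /phi_lip bigmax0 // => h _; rewrite bigmax0 // => k _.
  by rewrite subrr normr0 mul0r.
rewrite addr0 /phi_supnorm; apply/bigmax_leP; split => // h _.
by rewrite normr1.
Qed.

End BL.


Section EN.
Variables (R : realType) (m : nat).
Implicit Types (x y : 'rV[R]_m).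

Lemma enorm_ge0 x : 0 <= enorm x.
Proof. exact: sqrtr_ge0. Qed.

Lemma sumsq_ge0 x : 0 <= \sum_(i < m) x ord0 i ^+ 2.
Proof. by apply: sumr_ge0 => i _; exact: sqr_ge0. Qed.

Lemma coord_le_enorm x j : `|x ord0 j| <= enorm x.
Proof.
rewrite -sqrtr_sqr /enorm ler_wsqrtr // (bigD1 j) //= lerDl.
by apply: sumr_ge0 => i _; exact: sqr_ge0.
Qed.

Lemma sq_sum_ge (F : 'I_m -> R) : (forall i, 0 <= F i) ->
  \sum_(i < m) F i ^+ 2 <= (\sum_(i < m) F i) ^+ 2.
Proof.
elim: m F => [|k IH] F F0; first by rewrite !big_ord0 expr0n.
rewrite !big_ord_recr /=.
have := IH (fun i => F (widen_ord (leqnSn k) i)) (fun i => F0 _).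
have : 0 <= \sum_(i < k) F (widen_ord (leqnSn k) i).
  by apply: sumr_ge0 => i _.
have := F0 ord_max.
set A := \sum_(i < k) _; set B := \sum_(i < k) _; set a := F _.
move=> a0 A0 HB. rewrite sqrrD. nra.
Qed.

Lemma enorm_le_sum x : enorm x <= \sum_(i < m) `|x ord0 i|.
Proof.
have S0 : 0 <= \sum_(i < m) `|x ord0 i| by apply: sumr_ge0.
rewrite -(ger0_norm S0) -sqrtr_sqr /enorm ler_wsqrtr //.
apply: le_trans (@sq_sum_ge (fun i => `|x ord0 i|) _) => //.
by apply: ler_sum => i _; rewrite real_normK // num_real.
Qed.

Lemma enormZ (a : R) x : enorm (a *: x) = `|a| * enorm x.
Proof.
rewrite /enorm (eq_bigr (fun i => a ^+ 2 * x ord0 i ^+ 2)); last first.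
  by move=> i _; rewrite mxE exprMn.
by rewrite -mulr_sumr sqrtrM ?sqr_ge0 // sqrtr_sqr.
Qed.

Lemma cauchy_schwarz x y :
  \sum_(i < m) x ord0 i * y ord0 i <= enorm x * enorm y.
Proof.
set A := \sum_(i < m) x ord0 i ^+ 2; set B := \sum_(i < m) y ord0 i ^+ 2.
have A0 : 0 <= A by exact: sumsq_ge0.
have B0 : 0 <= B by exact: sumsq_ge0.
have [Ae|Apos] := eqVneq A 0.
  have xi0 : forall i, x ord0 i = 0.
    move=> i; move/eqP: Ae; rewrite psumr_eq0 => [/allP /(_ i) |i' _]; last exact: sqr_ge0.
    by rewrite mem_index_enum => /(_ isT) /implyP /(_ isT); rewrite sqrf_eq0 => /eqP.
  rewrite big1 ?mulr_ge0 ?enorm_ge0 // => i _; by rewrite xi0 mul0r.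
have [Be|Bpos] := eqVneq B 0.
  have yi0 : forall i, y ord0 i = 0.
    move=> i; move/eqP: Be; rewrite psumr_eq0 => [/allP /(_ i) |i' _]; last exact: sqr_ge0.
    by rewrite mem_index_enum => /(_ isT) /implyP /(_ isT); rewrite sqrf_eq0 => /eqP.
  rewrite big1 ?mulr_ge0 ?enorm_ge0 // => i _; by rewrite yi0 mulr0.
have sA : 0 < enorm x by rewrite /enorm sqrtr_gt0 lt_def Apos A0.
have sB : 0 < enorm y by rewrite /enorm sqrtr_gt0 lt_def Bpos B0.
have eA : enorm x ^+ 2 = A by rewrite sqr_sqrtr.
have eB : enorm y ^+ 2 = B by rewrite sqr_sqrtr.
set a := enorm x in sA eA *; set b := enorm y in sB eB *.
(* 2 x_i y_i a b <= b^2 x_i^2 + a^2 y_i^2 *)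
have key : \sum_(i < m) (2 * a * b) * (x ord0 i * y ord0 i)
    <= \sum_(i < m) (b ^+ 2 * x ord0 i ^+ 2 + a ^+ 2 * y ord0 i ^+ 2).
  apply: ler_sum => i _.
  have := sqr_ge0 (b * x ord0 i - a * y ord0 i); rewrite sqrrB; nra.
rewrite -mulr_sumr big_split /= -!mulr_sumr -/A -/B -eA -eB in key.
have ab : 0 < 2 * a * b by rewrite !mulr_gt0.
set S := \sum_(i < m) _ in key *.
nra.
Qed.

Lemma enormD x y : enorm (x + y) <= enorm x + enorm y.
Proof.
have eA : enorm x ^+ 2 = \sum_(i < m) x ord0 i ^+ 2 by rewrite sqr_sqrtr // sumsq_ge0.
have eB : enorm y ^+ 2 = \sum_(i < m) y ord0 i ^+ 2 by rewrite sqr_sqrtr // sumsq_ge0.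
have := cauchy_schwarz x y.
have h0 : 0 <= enorm x + enorm y by rewrite addr_ge0 ?enorm_ge0.
move: eA eB h0; set a := enorm x; set b := enorm y => eA eB h0 cs.
rewrite -(ger0_norm h0) -sqrtr_sqr /enorm ler_wsqrtr //.
rewrite (eq_bigr (fun i => x ord0 i ^+ 2 + y ord0 i ^+ 2 + 2 * (x ord0 i * y ord0 i)));
  last by move=> i _; rewrite mxE sqrrD -mulr_natl mulrA; ring.
rewrite !big_split /= -mulr_sumr sqrrD -mulr_natr.
rewrite -eA -eB; lra.
Qed.

Lemma enormB_le x y : enorm x <= enorm y + enorm (x - y).
Proof. by have := enormD y (x - y); rewrite addrC subrK. Qed.

End EN.


Section M.
Variables (R : realType) (d n : nat).
Local Notation Y := (Yt R d n).
Local Notation YM := (Ym R d n).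

Definition dsum (y z : Y) : R := \sum_(j < d) `|z.1 ord0 j - y.1 ord0 j|
   + \sum_(h < n) `|z.2 ord0 h - y.2 ord0 h|.

Lemma dsum_ge0 y z : 0 <= dsum y z.
Proof. by rewrite addr_ge0 // sumr_ge0. Qed.

Lemma ball_coord (y z : Y) e : ball y e z ->
  (forall j, `|z.1 ord0 j - y.1 ord0 j| < e) /\ (forall h, `|z.2 ord0 h - y.2 ord0 h| < e).
Proof.
rewrite /ball /= => -[[_ H1] [_ H2]]; split => j.
  by have := H1 ord0 j; rewrite /ball /= distrC.
by have := H2 ord0 j; rewrite /ball /= distrC.
Qed.

Lemma dsum_ball (y z : Y) e : ball y e z -> dsum y z <= (d + n)%:R * e.
Proof.
move=> /ball_coord [H1 H2]; rewrite natrD mulrDl /dsum.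
apply: lerD.
  apply: le_trans (ler_sum _ (fun j _ => ltW (H1 j))) _.
  by rewrite sumr_const card_ord mulr_natl.
apply: le_trans (ler_sum _ (fun j _ => ltW (H2 j))) _.
by rewrite sumr_const card_ord mulr_natl.
Qed.

Lemma dsum_ge1 (y z : Y) : enorm (z.1 - y.1) <= dsum y z.
Proof.
apply: le_trans (enorm_le_sum _) _; rewrite /dsum.
rewrite (eq_bigr (fun j => `|z.1 ord0 j - y.1 ord0 j|)); last by move=> j _; rewrite !mxE.
by rewrite lerDl sumr_ge0.
Qed.

Lemma dsum_ge2 (y z : Y) : \sum_(h < n) `|z.2 ord0 h - y.2 ord0 h| <= dsum y z.
Proof. by rewrite /dsum lerDr sumr_ge0. Qed.

Lemma meas_ball (D : set Y) (f : Y -> R) :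
  measurable (D : set YM) ->
  (forall y, D y -> forall e, 0 < e -> exists2 del, 0 < del &
      forall z, D z -> ball y del z -> `|f z - f y| < e) ->
  measurable_fun (D : set YM) (f : YM -> R).
Proof.
move=> mD Hc; apply: (measurability _ (measurable_realfun.RGenOpens.measurableE R)).
move=> _ [_ [a [b ->]] <-].
pose P := [set p : Y * R | D p.1 /\ 0 < p.2 /\
   (forall z, D z -> ball p.1 p.2 z -> a < f z < b)].
have -> : D `&` f @^-1` `]a, b[%classic = D `&` \bigcup_(p in P) ball p.1 p.2.
  apply/seteqP; split => [y [Dy /=]|y [Dy [p [Dp [p0 Hp]] bp]]].
  - rewrite in_itv /= => /andP[ay yb].
    have hm : 0 < Num.min (f y - a) (b - f y) by rewrite lt_min !subr_gt0 ay yb.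
    have [del del0 Hd] := Hc y Dy _ hm.
    split => //; exists (y, del) => /=; last exact: ballxx.
    split => //; split => // z Dz /(Hd _ Dz); rewrite lt_min !ltr_norml.
    move=> /andP[/andP[h1 h2] /andP[h3 h4]]; apply/andP; split; lra.
  - by split => //=; rewrite in_itv /=; exact: Hp.
apply: measurableI => //; apply: sub_sigma_algebra; apply: bigcup_open => p _.
exact: ball_open.
Qed.

Lemma meas_loclip (D : set Y) (f : Y -> R) :
  measurable (D : set YM) ->
  (forall y, D y -> exists C, exists2 rho, 0 < rho &
      forall z, D z -> ball y rho z -> `|f z - f y| <= C * dsum y z) ->
  measurable_fun (D : set YM) (f : YM -> R).
Proof.
move=> mD Hc; apply: meas_ball => // y Dy e e0.
have [C [rho rho0 HC]] := Hc y Dy.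
set k := (d + n)%:R : R.
have k0 : 0 <= k by [].
set del := Num.min rho (e / ((`|C| + 1) * (k + 1))).
have pos : 0 < (`|C| + 1) * (k + 1) by rewrite mulr_gt0 // ltr_pwDr.
have del0 : 0 < del by rewrite lt_min rho0 divr_gt0.
exists del => // z Dz bz.
have bz' : ball y rho z by apply: le_ball bz; rewrite ge_min lexx.
apply: le_lt_trans (HC z Dz bz') _.
have ds := dsum_ball bz; have ds0 := dsum_ge0 y z.
have dle : del <= e / ((`|C| + 1) * (k + 1)) by rewrite ge_min lexx orbT.
have : del * ((`|C| + 1) * (k + 1)) <= e by rewrite -ler_pdivlMr.
have Cn := ler_norm C; have Cn0 := normr_ge0 C.
nra.
Qed.

Lemma meas_c1 j : measurable_fun [set: YM] (fun y : YM => (y : Y).1 ord0 j).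
Proof.
apply: meas_ball => // y _ e e0; exists e => // z _ /ball_coord [H _]; exact: H.
Qed.

Lemma meas_c2 h : measurable_fun [set: YM] (fun y : YM => (y : Y).2 ord0 h).
Proof.
apply: meas_ball => // y _ e e0; exists e => // z _ /ball_coord [_ H]; exact: H.
Qed.

End M.


Lemma enorm_subC (R : realType) m (x y : 'rV[R]_m) : enorm (x - y) = enorm (y - x).
Proof. by rewrite -opprB -scaleN1r enormZ normrN normr1 mul1r. Qed.

Section M4.
Variables (R : realType) (d n : nat).
Hypothesis n0 : (0 < n)%N.
Local Notation Y := (Yt R d n).
Local Notation YM := (Ym R d n).

Lemma ynorm_Yset (y : Y) : Yset y -> ynorm y = enorm y.1 + 1.
Proof. by move=> Yy; rewrite /ynorm blnorm_simplex. Qed.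

Lemma meas_enorm1 : measurable_fun [set: YM] (fun y : YM => enorm (y : Y).1).
Proof.
apply: meas_loclip => // y _; exists 1; exists 1 => // z _ _.
rewrite mul1r; apply: le_trans (dsum_ge1 _ _).
rewrite ler_norml; apply/andP; split.
  have := enormB_le y.1 z.1; rewrite enorm_subC; lra.
have := enormB_le z.1 y.1; lra.
Qed.

Lemma meas_blnorm2 : measurable_fun [set: YM] (fun y : YM => blnorm (y : Y).2).
Proof.
apply: meas_loclip => // y _; exists 1; exists 1 => // z _ _.
rewrite mul1r; apply: le_trans (dsum_ge2 _ _).
rewrite ler_norml; apply/andP; split.
  have := blnorm_lip y.2 z.2.
  rewrite (eq_bigr (fun h => `|z.2 ord0 h - y.2 ord0 h|)); last by move=> h _; rewrite distrC.
  lra.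
have := blnorm_lip z.2 y.2; lra.
Qed.

Lemma meas_ynorm : measurable_fun [set: YM] (fun y : YM => ynorm (y : Y)).
Proof. exact: measurable_realfun.measurable_funD meas_enorm1 meas_blnorm2. Qed.

Definition gY (y : Y) : R := \sum_(h < n) (`|y.2 ord0 h| - y.2 ord0 h)
   + `|\sum_(h < n) y.2 ord0 h - 1|.

Lemma meas_gY : measurable_fun [set: YM] (fun y : YM => gY y).
Proof.
apply: measurable_realfun.measurable_funD.
  apply: measurable_sum => h.
  apply: measurable_realfun.measurable_funB; last exact: meas_c2.
  have H1 := (measurableT_comp (f := fun x : R => `|x|) (g := fun y : YM => (y:Y).2 ord0 h) (@measurable_realfun.normr_measurable R setT) (meas_c2 h)). exact H1.
apply: measurableT_comp (@measurable_realfun.normr_measurable R setT) _.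
apply: measurable_realfun.measurable_funB; last exact: measurable_cst.
by apply: measurable_sum => h; exact: meas_c2.
Qed.

Lemma YsetE : (@Yset R d n) = [set y | gY y = 0].
Proof.
apply/seteqP; split => y /=.
  move=> [y0 y1]; rewrite /gY y1 subrr normr0 addr0 big1 // => h _.
  by rewrite ger0_norm ?subrr.
rewrite /gY => /eqP; rewrite paddr_eq0; first last.
- exact: normr_ge0.
- by apply: sumr_ge0 => h _; rewrite subr_ge0 ler_norm.
move=> /andP[/eqP S0]; rewrite normr_eq0 subr_eq0 => /eqP S1.
split => // h.
move/eqP: S0; rewrite psumr_eq0 => [/allP /(_ h)|i _]; last by rewrite subr_ge0 ler_norm.
rewrite mem_index_enum => /(_ isT) /implyP /(_ isT); rewrite subr_eq0 => /eqP <-.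
exact: normr_ge0.
Qed.

Lemma meas_Yset : measurable (@Yset R d n : set YM).
Proof.
rewrite YsetE.
have := meas_gY measurableT (measurable_set1 (0 : R)); rewrite setTI; exact.
Qed.

Definition Kb (r : R) : set Y := @Yset R d n `&` @ballY R d n r.

Lemma KbE r : Kb r = @Yset R d n `&` [set y : Y | enorm y.1 + 1 <= r].
Proof.
apply/seteqP; split => y [Yy H]; split => //.
  by move: H; rewrite /ballY /= ynorm_Yset.
by rewrite /ballY /= ynorm_Yset.
Qed.

Lemma meas_Kb r : measurable (Kb r : set YM).
Proof.
rewrite KbE; apply: measurableI; first exact: meas_Yset.
have := meas_enorm1 measurableT (measurable_itv `]-oo, (r - 1)]); rewrite setTI.
congr measurable; apply/seteqP; split => y /=; rewrite in_itv /=; lra.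
Qed.

Lemma meas_nKb r : measurable (~` Kb r : set YM).
Proof. by apply: measurableC; exact: meas_Kb. Qed.

End M4.


Section M5.
Variables (R : realType) (d n : nat).
Hypothesis n0 : (0 < n)%N.
Local Notation Y := (Yt R d n).
Local Notation YM := (Ym R d n).
Local Notation PR := (Prob R d n).

Lemma ynorm_ge0 (y : Y) : 0 <= ynorm y.
Proof. by rewrite addr_ge0 ?enorm_ge0 ?blnorm_ge0. Qed.

Lemma supp_sub (P : PR) r (A : set YM) : measurable A -> A `<=` ~` Kb r ->
  inPK P (@ballY R d n r) -> P A = 0%E.
Proof.
move=> mA sA H; apply/le_anti/andP; split; last exact: measure_ge0.
rewrite -H; apply: le_measure => //; rewrite inE //; exact: meas_nKb.
Qed.

Lemma supp_mono (P : PR) r r' : r <= r' -> inPK P (@ballY R d n r) ->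
  inPK P (@ballY R d n r').
Proof.
move=> rr H; apply: (supp_sub (r := r)) => //; first exact: meas_nKb.
move=> y /= Ky [Yy By]; apply: Ky; split => //; rewrite /ballY /= in By *; lra.
Qed.

Lemma m1_bound (P : PR) r : 0 <= r -> inPK P (@ballY R d n r) ->
  (m1e P <= r%:E)%E.
Proof.
move=> r0 H; rewrite /m1e.
rewrite (@ge0_negligible_integral _ _ _ P setT (~` Kb r)) //; first last.
- by move=> y _; rewrite lee_fin ynorm_ge0.
- by apply/measurable_realfun.measurable_EFinP; exact: meas_ynorm.
- exact: meas_nKb.
rewrite setTD setCK.
apply: (@le_trans _ _ (\int[P]_(x in Kb r) (cst r%:E) x)%E).
  apply: ge0_le_integral => //.
  - exact: meas_Kb.
  - by move=> y _; rewrite lee_fin ynorm_ge0.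
  - by apply/measurable_realfun.measurable_EFinP; apply: measurable_funTS; exact: meas_ynorm.
  - by move=> y [_ By]; rewrite lee_fin.
rewrite integral_cst; last exact: meas_Kb.
rewrite -[X in (_ <= X)%E]mule1; apply: lee_wpmul2l; first by rewrite lee_fin.
by apply: probability_le1; exact: meas_Kb.
Qed.

Lemma inP1_of (P : PR) r : 0 <= r -> inPK P (@ballY R d n r) -> inP1 P /\ m1 P <= r.
Proof.
move=> r0 H; have Hm := m1_bound r0 H.
have m0 : (0 <= m1e P)%E by apply: integral_ge0 => y _; rewrite lee_fin ynorm_ge0.
split; first split.
- apply: (supp_sub (r := r)) => //.
    by apply: measurableC; exact: meas_Yset.
  by move=> y Yy [Yy' _].
- exact: le_lt_trans Hm (ltry _).
rewrite /m1; have fin : m1e P \is a fin_num by rewrite ge0_fin_numE // (le_lt_trans Hm) ?ltry.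
by rewrite -lee_fin fineK.
Qed.

Lemma m1_ge0 (P : PR) : 0 <= m1 P.
Proof. by apply: fine_ge0; apply: integral_ge0 => y _; rewrite lee_fin ynorm_ge0. Qed.

End M5.


Lemma ydist_le_dsum (R : realType) d n (y z : Yt R d n) : ydist z y <= dsum y z.
Proof.
rewrite /ydist /dsum; apply: lerD.
  apply: le_trans (enorm_le_sum _) _.
  by rewrite le_eqVlt; apply/orP; left; apply/eqP; apply: eq_bigr => j _; rewrite !mxE.
apply: le_trans (blnorm_le _) _.
by rewrite le_eqVlt; apply/orP; left; apply/eqP; apply: eq_bigr => j _; rewrite !mxE.
Qed.


Lemma Rf_cont (R : realType) (c b : R) : continuous (fun T : R => (c * expR (b * T) - 1) / 2 + T).
Proof.
move=> x.
apply: cvgD; last exact: cvg_id.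
apply: cvgM; last exact: cvg_cst.
apply: cvgB; last exact: cvg_cst.
apply: cvgM; first exact: cvg_cst.
apply: (@continuous_comp _ _ _ (fun T => b * T) expR).
  apply: cvgM; [exact: cvg_cst | exact: cvg_id].
exact: continuous_expR.
Qed.

Section Efun.
Variables (R : realType) (r0 M : R).
Hypotheses (r00 : 0 <= r0) (M0 : 0 <= M).
Definition Ef (t : R) := ((1 + 2 * r0) * expR (2 * M * t) - 1) / 2.

Lemma Ef_mono a b : a <= b -> Ef a <= Ef b.
Proof.
move: (r00) (M0) => r00' M0'.
move=> ab; have p : 0 < 1 + 2 * r0 by rewrite (lt_le_trans ltr01) // lerDl mulr_ge0.
rewrite /Ef ler_pM2r // lerD2r ler_pM2l //.
by rewrite ler_expR ler_wpM2l // mulr_ge0.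
Qed.

Lemma Ef_ge a : 0 <= a -> r0 <= Ef a.
Proof.
move: (r00) (M0) => r00' M0'.
move=> a0; have : 1 <= expR (2 * M * a).
  have h1 := expR_ge1Dx (2 * M * a).
  have h2 : 0 <= 2 * M * a by rewrite !mulr_ge0.
  lra.
rewrite /Ef => h; rewrite ler_pdivlMr //.
have : 0 <= (1 + 2 * r0) * (expR (2 * M * a) - 1) by rewrite mulr_ge0 //; lra.
lra.
Qed.

Lemma Ef_step a s : 0 <= s -> Ef a + s * (M * (1 + 2 * Ef a)) <= Ef (a + s).
Proof.
move: (r00) (M0) => r00' M0'.
move=> s0.
have -> : 1 + 2 * Ef a = (1 + 2 * r0) * expR (2 * M * a) by rewrite /Ef; field.
rewrite /Ef mulrDr expRD.
have e0 := expR_gt0 (2 * M * a).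
have := expR_ge1Dx (2 * M * s).
set A := expR (2 * M * a); set B := expR (2 * M * s) => h.
have : 0 <= (1 + 2 * r0) * A by rewrite mulr_ge0 // ?ltW //; lra.
move=> A0.
rewrite ler_pdivlMr // mulrDl divfK //; nra.
Qed.

End Efun.
Section Main.
Variables (R : realType) (n d : nat).
Hypothesis n0 : (0 < n)%N.
Local Notation Y := (Yt R d n).
Local Notation YM := (Ym R d n).
Local Notation PR := (Prob R d n).
Variable (v : Prob R d n -> Yt R d n -> 'rV[R]_d).
Hypothesis Hv12 : forall r : R, exists Lv : R,
     (forall (P : Prob R d n) (y1 y2 : Yt R d n), inPK P (ballY r) ->
        (@Yset R d n `&` @ballY R d n r) y1 -> (@Yset R d n `&` @ballY R d n r) y2 ->
        enorm (v P y1 - v P y2) <= Lv * ydist y1 y2) /\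
     (forall (P1 P2 : Prob R d n) (y : Yt R d n), inPK P1 (ballY r) ->
        inPK P2 (ballY r) -> (@Yset R d n `&` @ballY R d n r) y ->
        enorm (v P1 y - v P2 y) <= Lv * W1 P1 P2).
Variable Mv : R.
Hypothesis HMv : forall (P : Prob R d n) (y : Yt R d n), inP1 P -> @Yset R d n y ->
     enorm (v P y) <= Mv * (1 + ynorm y + m1 P).
Variable tau : nat -> R.
Hypothesis Htau_pos : forall k, 0 < tau k.
Variables (PsiC : nat -> R -> Prob R d n) (PsiT : nat -> nat -> Prob R d n)
  (lnew : nat -> nat -> Yt R d n -> 'rV[R]_n).
Hypothesis Hlnew : forall k i (y : Yt R d n), Yset y -> csimplex (lnew k i y).
Hypothesis Hmeas : forall k i, measurable_fun (@Yset R d n : set (Ym R d n))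
     (fun y : Ym R d n => ((y.1, lnew k i y) : Ym R d n)).
Hypothesis Htilde : forall k i (A : set (Ym R d n)), measurable A ->
     PsiT k i.+1 A =
       PsiC k (tk tau k i) (@Yset R d n `&` ((fun y : Yt R d n => (y.1, lnew k i y)) @^-1` A)).
Hypothesis Hcurve : forall k i (t : R), tk tau k i <= t <= tk tau k i.+1 ->
     forall (A : set (Ym R d n)), measurable A ->
     PsiC k t A =
       PsiC k (tk tau k i) (@Yset R d n `&`
          ((fun y : Yt R d n => (Xmap tau lnew v PsiT k i t y, Lam tau lnew k i t y)) @^-1` A)).

Local Notation G k i := (fun y : Y => (y.1, lnew k i y)).

Lemma G_Kb k i r (y : Y) : Kb r y -> Kb r (G k i y).
Proof.
move=> [Yy By]; have Yg : Yset (G k i y) by exact: Hlnew.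
split => //; rewrite /ballY /= (ynorm_Yset n0 Yg) /=.
by move: By; rewrite /ballY /= (ynorm_Yset n0 Yy).
Qed.

Lemma stepT k i r : inPK (PsiC k (tk tau k i)) (@ballY R d n r) ->
  inPK (PsiT k i.+1) (@ballY R d n r).
Proof.
move=> H; rewrite /inPK /supported_in Htilde; last exact: meas_nKb n0 r.
apply: (supp_sub n0 (r := r)) => //.
  have HH := (Hmeas k i (@meas_Yset R d n) (meas_nKb n0 r)). exact HH.
by move=> y [Yy nG] Ky; apply: nG; exact: G_Kb.
Qed.

Lemma tk_step k i : tk tau k i.+1 - tk tau k i = tau k.
Proof. by rewrite /tk -mulrBl -natrB // subSnn mul1r. Qed.

Lemma Lam_end k i (y : Y) : Lam tau lnew k i (tk tau k i.+1) y = lnew k i y.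
Proof.
rewrite /Lam tk_step divff; last exact: lt0r_neq0 (Htau_pos k).
by rewrite scale1r addrC subrK.
Qed.


Lemma v_meas k i r : 0 <= r -> inPK (PsiT k i.+1) (@ballY R d n r) ->
  forall j, measurable_fun (@Yset R d n : set YM)
    (fun y : YM => v (PsiT k i.+1) y ord0 j).
Proof.
move=> r0 H j; apply: meas_loclip; first exact: (@meas_Yset R d n).
move=> y Yy.
have yn0 := ynorm_ge0 y.
set rho := r + ynorm y + 1.
have [Lv [HL _]] := Hv12 rho.
have Hr : inPK (PsiT k i.+1) (@ballY R d n rho).
  by apply: (supp_mono n0 _ H); rewrite /rho; lra.
have kpos : 0 < (d + n)%:R + 1 :> R by rewrite ltr_pwDr.
exists `|Lv|; exists (1 / ((d + n)%:R + 1)); first by rewrite divr_gt0.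
move=> z Yz bz.
have ds := dsum_ball bz.
have ds1 : dsum y z <= 1.
  apply: le_trans ds _; rewrite mul1r ler_pdivrMr // mul1r lerDl //.
have Ky : (@Yset R d n `&` @ballY R d n rho) y.
  by split => //; rewrite /ballY /= /rho; lra.
have Kz : (@Yset R d n `&` @ballY R d n rho) z.
  split => //; rewrite /ballY /= (ynorm_Yset n0 Yz).
  have := enormB_le z.1 y.1; have := dsum_ge1 y z.
  move: (ynorm_Yset n0 Yy); rewrite /rho; lra.
have := coord_le_enorm (v (PsiT k i.+1) z - v (PsiT k i.+1) y) j.
rewrite !mxE => Hc; apply: le_trans Hc _.
apply: le_trans (HL _ _ _ Hr Kz Ky) _.
have yd0 : 0 <= ydist z y by rewrite /ydist addr_ge0 ?enorm_ge0 ?blnorm_ge0.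
apply: le_trans (_ : `|Lv| * ydist z y <= _).
  by apply: ler_wpM2r => //; exact: ler_norm.
by apply: ler_wpM2l => //; exact: ydist_le_dsum.
Qed.

Lemma phi_meas k i r (s : R) : 0 <= r -> inPK (PsiT k i.+1) (@ballY R d n r) ->
  measurable_fun (@Yset R d n : set YM)
    (fun y : YM => enorm ((y : Y).1 + s *: v (PsiT k i.+1) ((y : Y).1, lnew k i y))).
Proof.
move=> r0 H.
have -> : (fun y : YM => enorm ((y : Y).1 + s *: v (PsiT k i.+1) ((y : Y).1, lnew k i y)))
  = Num.sqrt \o (fun y : YM => \sum_(j < d) ((y : Y).1 ord0 j
       + s * ((fun z : YM => v (PsiT k i.+1) z ord0 j) \o (G k i)) y) ^+ 2).
  by apply/funext => y /=; rewrite /enorm; congr Num.sqrt; apply: eq_bigr => j _; rewrite !mxE.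
apply: measurableT_comp.
  exact: measurable_realfun.continuous_measurable_fun (@sqrt_continuous R).
apply: measurable_sum => j.
apply: measurable_realfun.measurable_funX.
apply: measurable_realfun.measurable_funD.
  by apply: measurable_funTS; exact: meas_c1.
apply: measurable_realfun.measurable_funM; first exact: measurable_cst.
apply: (measurable_comp (F := (@Yset R d n : set YM))).
- exact: (@meas_Yset R d n).
- by move=> _ [y Yy <-]; exact: Hlnew.
- exact: (v_meas r0 H).
- exact: Hmeas.
Qed.

Lemma stepC k i r t : 0 <= r -> inPK (PsiC k (tk tau k i)) (@ballY R d n r) ->
  tk tau k i <= t <= tk tau k i.+1 ->
  inPK (PsiC k t) (@ballY R d n (r + (t - tk tau k i) * (Num.max Mv 0 * (1 + 2 * r)))).
Proof.
move=> r0 H Ht.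
set s := t - tk tau k i.
set r' := r + s * _.
have HT := stepT H.
have [HP1 Hm1] := inP1_of n0 r0 HT.
have taup := Htau_pos k.
have hs : 0 <= s <= tau k.
  by move: Ht; rewrite /s -(tk_step k i); move=> /andP[h1 h2]; apply/andP; split; lra.
set c := s / tau k.
have hc : 0 <= c <= 1.
  move: hs => /andP[h1 h2]; apply/andP; split; first by rewrite divr_ge0 // ltW.
  by rewrite ler_pdivrMr // mul1r.
rewrite /inPK /supported_in (Hcurve Ht); last exact: meas_nKb n0 r'.
set F := fun y : Y => (Xmap tau lnew v PsiT k i t y, Lam tau lnew k i t y).
have FY : forall y, Yset y -> Yset (F y).
  move=> y Yy; have [l0 l1] := Hlnew k i Yy; case: Yy => y0 y1.
  rewrite /F /Lam -/s -/c; split => /=.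
    move=> h; rewrite !mxE; move: (y0 h) (l0 h) hc => a b /andP[c0 c1]; nra.
  rewrite (eq_bigr (fun h => y.2 ord0 h + c * (lnew k i y ord0 h - y.2 ord0 h))); last first.
    by move=> h _; rewrite !mxE.
  by rewrite big_split /= -mulr_sumr sumrB y1 l1 subrr mulr0 addr0.
have XE : forall y, (F y).1 = y.1 + s *: v (PsiT k i.+1) (G k i y).
  by move=> y; rewrite /F /= /Xmap Lam_end.
apply: (supp_sub n0 (r := r)) => //.
  have -> : @Yset R d n `&` F @^-1` (~` Kb r') =
      @Yset R d n `&` (fun y : YM => enorm ((y : Y).1 + s *: v (PsiT k i.+1) ((y : Y).1, lnew k i y)))
         @^-1` `]r' - 1, +oo[%classic.
    apply/seteqP; split => y [Yy Hy]; split => //=.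
      rewrite in_itv /= andbT; rewrite -XE; apply/negPn/negP; rewrite -leNgt => Hle.
      by apply: Hy; rewrite (KbE d n0) /=; split; [exact: FY|lra].
    move: Hy; rewrite /= in_itv /= andbT -XE => Hlt.
    by rewrite (KbE d n0) /= => -[_ Hle]; lra.
  exact: (phi_meas s r0 HT (@meas_Yset R d n) (measurable_itv _)).
move=> y [Yy nF] Ky; apply: nF.
have YG : Yset (G k i y) by exact: Hlnew.
have KG := G_Kb k i Ky.
split; first exact: FY.
rewrite /ballY /= (ynorm_Yset n0 (FY y Yy)) XE.
have e1 := enormD y.1 (s *: v (PsiT k i.+1) (G k i y)).
rewrite enormZ ger0_norm in e1; last by case/andP: hs.
have e2 := HMv HP1 YG.
have gn : ynorm (G k i y) <= r by case: KG.
have yn : enorm y.1 + 1 <= r by move: Ky; rewrite (KbE d n0) => -[].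
have m0 := m1_ge0 (PsiT k i.+1).
have gn0 := ynorm_ge0 (G k i y).
set X := 1 + ynorm (G k i y) + m1 (PsiT k i.+1) in e2.
have X0 : 0 <= X by rewrite /X; lra.
have X1 : X <= 1 + 2 * r by rewrite /X; lra.
have Mle : Mv * X <= Num.max Mv 0 * (1 + 2 * r).
  apply: le_trans (_ : Num.max Mv 0 * X <= _).
    by apply: ler_wpM2r => //; rewrite le_max lexx.
  by apply: ler_wpM2l => //; rewrite le_max lexx orbT.
have en0 := enorm_ge0 (v (PsiT k i.+1) (G k i y)).
have s0 : 0 <= s by case/andP: hs.
rewrite /r'; nra.
Qed.

Variable Psihat : Prob R d n.
Hypothesis HPsihat : inPc Psihat.
Hypothesis Hinit : forall k (A : set (Ym R d n)), measurable A -> PsiC k 0 A = Psihat A.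

Lemma tk_ge0 k i : 0 <= tk tau k i.
Proof. by rewrite /tk mulr_ge0 // ltW. Qed.

Lemma main_sec : exists Rf : R -> R,
    (forall s, 0 <= s -> 0 <= Rf s) /\
    (forall s1 s2, 0 <= s1 -> s1 < s2 -> Rf s1 < Rf s2) /\
    {within `[0, +oo[, continuous Rf} /\
    forall (T : R) (k : nat) (t : R), 0 <= T -> 0 <= t <= T ->
      inPK (PsiC k t) (ballY (Rf T)) /\
      (forall i, tk tau k i <= t < tk tau k i.+1 ->
         inPK (PsiC k (tk tau k i)) (ballY (Rf T))) /\
      (forall i, tk tau k i < t <= tk tau k i.+1 ->
         inPK (PsiT k i.+1) (ballY (Rf T))).
Proof.
have [_ [r1 Hr1]] := HPsihat.
set r0 := Num.max r1 0.
have r00 : 0 <= r0 by rewrite le_max lexx orbT.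
have H0 : inPK Psihat (@ballY R d n r0) by apply: (supp_mono n0 _ Hr1); rewrite le_max lexx.
have M0 : 0 <= Num.max Mv 0 by rewrite le_max lexx orbT.
have Hi : forall k i, inPK (PsiC k (tk tau k i)) (@ballY R d n (Ef r0 (Num.max Mv 0) (tk tau k i))).
  move=> k; elim => [|i IH].
    rewrite /tk mul0r /inPK /supported_in Hinit; last exact: meas_nKb n0 _.
    have -> : Ef r0 (Num.max Mv 0) 0 = r0 by rewrite /Ef mulr0 expR0 mulr1; field.
    exact: H0.
  have E0 : 0 <= Ef r0 (Num.max Mv 0) (tk tau k i) by apply: le_trans (Ef_ge r00 M0 (tk_ge0 k i)).
  have Ht : tk tau k i <= tk tau k i.+1 <= tk tau k i.+1.
    by rewrite lexx andbT -subr_ge0 tk_step ltW.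
  have := stepC E0 IH Ht; rewrite tk_step => H.
  apply: (supp_mono n0 _ H).
  have e : tk tau k i + tau k = tk tau k i.+1 by rewrite /tk -addn1 natrD mulrDl mul1r.
  rewrite -e; have HH := Ef_step r00 M0 (tk tau k i) (ltW (Htau_pos k)). exact HH.
have Hc : forall k t, 0 <= t -> inPK (PsiC k t) (@ballY R d n (Ef r0 (Num.max Mv 0) t)).
  move=> k t t0.
  have tp := Htau_pos k.
  have [h1 h2] : tk tau k (Num.truncn (t / tau k)) <= t /\ t < tk tau k (Num.truncn (t / tau k)).+1.
    have /andP[a b] := Num.Theory.truncn_itv (divr_ge0 t0 (ltW tp)).
    by rewrite /tk -ler_pdivlMr // -ltr_pdivrMr //.
  set i := Num.truncn _ in h1 h2.
  have E0 : 0 <= Ef r0 (Num.max Mv 0) (tk tau k i) by apply: le_trans (Ef_ge r00 M0 (tk_ge0 k i)).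
  have Ht : tk tau k i <= t <= tk tau k i.+1 by rewrite h1 ltW.
  have H := stepC E0 (Hi k i) Ht.
  apply: (supp_mono n0 _ H).
  have st : 0 <= t - tk tau k i by rewrite subr_ge0.
  have HH := Ef_step r00 M0 (tk tau k i) st.
  have e : tk tau k i + (t - tk tau k i) = t by rewrite addrC subrK.
  rewrite e in HH; exact HH.
exists (fun T => Ef r0 (Num.max Mv 0) T + T); split; [|split; [|split]].
- by move=> s s0; have := Ef_ge r00 M0 s0; lra.
- by move=> s1 s2 s10 s12; have := Ef_mono r00 M0 (ltW s12); lra.
- apply: continuous_subspaceT => x.
  have HH := @Rf_cont R (1 + 2 * r0) (2 * Num.max Mv 0) x; exact HH.
move=> T k t T0 /andP[t0 tT].
split; [|split].
- apply: (supp_mono n0 _ (Hc k t t0)).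
  by have := Ef_mono r00 M0 tT; lra.
- move=> i /andP[h1 h2]; apply: (supp_mono n0 _ (Hi k i)).
  by have := Ef_mono r00 M0 (le_trans h1 tT); lra.
- move=> i /andP[h1 h2]; apply: (supp_mono n0 _ (stepT (Hi k i))).
  by have := Ef_mono r00 M0 (le_trans (ltW h1) tT); lra.
Qed.
End Main.

Theorem lemma5p7 (R : realType) (n d : nat) (hn : (2 <= n)%N) (hd : (1 <= d)%N)
  (Q : 'rV[R]_d -> Prob R d n -> 'M[R]_n)
  (v : Prob R d n -> Yt R d n -> 'rV[R]_d)
  (* (Q0) *)
  (HQ0 : forall x (P : Prob R d n), inP1 P ->
     (forall h l, h != l -> 0 <= Q x P h l) /\
     (forall h, Q x P h h = - \sum_(l < n | l != h) Q x P l h))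
  (* (Q1) *)
  (HQ1 : forall x (P : Prob R d n), inP1 P ->
     exists! s : 'rV[R]_n, simplex s /\ detailed_balance Q x P s)
  (* (Q2) *)
  (HQ2 : forall r : R, exists LQ : R, forall x1 x2 (P1 P2 : Prob R d n),
     ballR r x1 -> ballR r x2 -> inPK P1 (ballY r) -> inPK P2 (ballY r) ->
     mnorm (Q x1 P1 - Q x2 P2) <= LQ * (enorm (x1 - x2) + W1 P1 P2))
  (* (Q3) *)
  (HQ3 : exists MQ : R, forall x (P : Prob R d n), inP1 P ->
     mnorm (Q x P) <= MQ * (1 + enorm x + m1 P))
  (* (v1), (v2) with a common constant L_{v,R} *)
  (Hv12 : forall r : R, exists Lv : R,
     (forall (P : Prob R d n) (y1 y2 : Yt R d n), inPK P (ballY r) ->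
        (@Yset R d n `&` @ballY R d n r) y1 -> (@Yset R d n `&` @ballY R d n r) y2 ->
        enorm (v P y1 - v P y2) <= Lv * ydist y1 y2) /\
     (forall (P1 P2 : Prob R d n) (y : Yt R d n), inPK P1 (ballY r) ->
        inPK P2 (ballY r) -> (@Yset R d n `&` @ballY R d n r) y ->
        enorm (v P1 y - v P2 y) <= Lv * W1 P1 P2))
  (* (v3) *)
  (Hv3 : exists Mv : R, forall (P : Prob R d n) (y : Yt R d n), inP1 P -> @Yset R d n y ->
     enorm (v P y) <= Mv * (1 + ynorm y + m1 P))
  (* time steps *)
  (tau : nat -> R) (Htau_pos : forall k, 0 < tau k) (Htau_lim : tau @ \oo --> 0)
  (* initial datum in P_c(Y) *)
  (Psihat : Prob R d n) (HPsihat : inPc Psihat)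
  (* the curves of the Markov alternate scheme:
       PsiC k t = Psi^k(t) (t >= 0), so that Psi^k_i = PsiC k (t^k_i);
       PsiT k i.+1 = tilde Psi^k_{i+1};  lnew k i = lambda^new built from Psi^k_i *)
  (PsiC : nat -> R -> Prob R d n)
  (PsiT : nat -> nat -> Prob R d n)
  (lnew : nat -> nat -> Yt R d n -> 'rV[R]_n)
  (Hinit : forall k (A : set (Ym R d n)), measurable A -> PsiC k 0 A = Psihat A)
  (Hmin : forall k i (y : Yt R d n), Yset y ->
     csimplex (lnew k i y) /\
     forall rho : 'rV[R]_n, csimplex rho ->
       Ent Q y.1 (lnew k i y) (PsiC k (tk tau k i))
         + dbar Q y.1 (PsiC k (tk tau k i)) (lnew k i y) y.2 ^+ 2 / (2 * tau k)
       <= Ent Q y.1 rho (PsiC k (tk tau k i))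
         + dbar Q y.1 (PsiC k (tk tau k i)) rho y.2 ^+ 2 / (2 * tau k))
  (Hmeas : forall k i, measurable_fun (@Yset R d n : set (Ym R d n))
     (fun y : Ym R d n => ((y.1, lnew k i y) : Ym R d n)))
  (Htilde : forall k i (A : set (Ym R d n)), measurable A ->
     PsiT k i.+1 A =
       PsiC k (tk tau k i) (@Yset R d n `&` ((fun y : Yt R d n => (y.1, lnew k i y)) @^-1` A)))
  (Hcurve : forall k i (t : R), tk tau k i <= t <= tk tau k i.+1 ->
     forall (A : set (Ym R d n)), measurable A ->
     PsiC k t A =
       PsiC k (tk tau k i) (@Yset R d n `&`
          ((fun y : Yt R d n => (Xmap tau lnew v PsiT k i t y, Lam tau lnew k i t y)) @^-1` A))) :
  exists Rf : R -> R,
    (forall s, 0 <= s -> 0 <= Rf s) /\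
    (forall s1 s2, 0 <= s1 -> s1 < s2 -> Rf s1 < Rf s2) /\
    {within `[0, +oo[, continuous Rf} /\
    forall (T : R) (k : nat) (t : R), 0 <= T -> 0 <= t <= T ->
      (* Psi^k(t) *)
      inPK (PsiC k t) (ballY (Rf T)) /\
      (* underline Psi^k(t) = Psi^k_i for t in [t_i, t_{i+1}) *)
      (forall i, tk tau k i <= t < tk tau k i.+1 ->
         inPK (PsiC k (tk tau k i)) (ballY (Rf T))) /\
      (* tilde Psi^k(t) = tilde Psi^k_{i+1} for t in (t_i, t_{i+1}] *)
      (forall i, tk tau k i < t <= tk tau k i.+1 ->
         inPK (PsiT k i.+1) (ballY (Rf T))).
Proof.
have n0 : (0 < n)%N by apply: leq_trans hn.
have [Mv HMv] := Hv3.
have Hlnew : forall k i (y : Yt R d n), Yset y -> csimplex (lnew k i y).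
  by move=> k i y Yy; have [] := Hmin k i y Yy.
exact: (main_sec n0 Hv12 HMv Htau_pos Hlnew Hmeas Htilde Hcurve HPsihat Hinit).
Qed.
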